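(* If $n \ge 3$ is odd, then $\mathrm{sg_e}(K_{n,n}) \ge n+2$ and $\mathrm{sg_e}(K_{n,n-1}) \ge n+1$.
   Context: All graphs are finite, simple and connected. A set $S \subseteq V(G)$ is a strong edge geodetic set of $G$ if one can assign to every unordered pair $\{u,v\}$ of distinct vertices of $S$ either one shortest $u,v$-path $P_{uv}$ in $G$ or no path, in such a way that every edge of $G$ lies on at least one of the assigned paths. The strong edge geodetic number $\mathrm{sg_e}(G)$ is the minimum cardinality of a strong edge geodetic set of $G$. $K_{n,m}$ denotes the complete bipartite graph with parts of sizes $n$ and $m$. *)

(* Defs.v *)
From mathcomp Require Import all_boot.
Set Implicit Arguments. Unset Strict Implicit. Unset Printing Implicit Defensive.

Section Geo.
Variable T : finType.

Definition walk_edges (u : T) (s : seq T) : seq (T * T) := zip (u :: s) s.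

Definition shortest_path (e : rel T) (u v : T) (s : seq T) : Prop :=
  [/\ path e u s, last u s = v &
      forall s' : seq T, path e u s' -> last u s' = v -> size s <= size s'].

Definition edge_on_path (x y u : T) (s : seq T) : bool :=
  ((x, y) \in walk_edges u s) || ((y, x) \in walk_edges u s).

(* S is a strong edge geodetic set: to each unordered pair {u,v} of distinct
   vertices of S (represented by u before v in the enumeration order of T)
   is assigned one shortest u,v-path or no path (P u v = None), such that
   every edge lies on some assigned path. *)
Definition strong_edge_geodetic (e : rel T) (S : {set T}) : Prop :=
  exists P : T -> T -> option (seq T),
    (forall u v s, u \in S -> v \in S -> enum_rank u < enum_rank v ->
        P u v = Some s -> shortest_path e u v s) /\
    (forall x y, e x y -> exists u v s,
        [/\ u \in S, v \in S, enum_rank u < enum_rank v,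
            P u v = Some s & edge_on_path x y u s]).

(* k <= sg_e(G): every strong edge geodetic set has at least k vertices
   (the minimum exists since V(G) itself is strong edge geodetic). *)
Definition sge_ge (e : rel T) (k : nat) : Prop :=
  forall S : {set T}, strong_edge_geodetic e S -> k <= #|S|.

End Geo.

Definition Knm (n m : nat) : rel ('I_n + 'I_m)%type :=
  fun x y => match x, y with
             | inl _, inr _ | inr _, inl _ => true
             | _, _ => false
             end.
Arguments Knm n m : clear implicits.

(* Main.v *)
Require Import Defs.
From mathcomp Require Import all_boot zify.
Set Implicit Arguments. Unset Strict Implicit. Unset Printing Implicit Defensive.

Lemma sp_struct (T : finType) (e : rel T) (c : T -> bool)
  (he : forall x y, e x y = (c x != c y)) u v s :
  u != v -> shortest_path e u v s ->
  s = [:: v] \/ (exists w, s = [:: w; v] /\ c w != c u /\ c u = c v).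
Proof.
move=> uv [hp hl hmin].
case: s hp hl hmin => [|w s] /=; first by move=> _ E; rewrite E eqxx in uv.
move=> /andP[euw hp] hl hmin.
case: s hp hl hmin => [|w2 s] /=; first by move=> _ -> _; left.
move=> /andP[eww2 hp] hl hmin.
case: (boolP (c u == c v)) => [/eqP cuv|cuv].
- have := hmin [:: w; v]; rewrite /= euw he -cuv eq_sym -he euw /= => /(_ isT erefl).
  case: s hp hl {hmin} => //= _ ->; right; exists w; split => //; split => //.
  by rewrite eq_sym -he.
- have := hmin [:: v]; rewrite /= he cuv => /(_ isT erefl) //.
Qed.


Lemma mid (T : finType) (e : rel T) (c : T -> bool)
  (he : forall x y, e x y = (c x != c y)) (S : {set T}) (P : T -> T -> option (seq T))
  (hP1 : forall u v s, u \in S -> v \in S -> enum_rank u < enum_rank v ->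
        P u v = Some s -> shortest_path e u v s)
  (hP2 : forall x y, e x y -> exists u v s,
        [/\ u \in S, v \in S, enum_rank u < enum_rank v,
            P u v = Some s & edge_on_path x y u s]) x y :
  x \notin S -> e x y -> exists u v, [/\ u \in S, v \in S, enum_rank u < enum_rank v,
     P u v = Some [:: x; v] & (y == u) || (y == v)].
Proof.
move=> xS exy.
have [u [v [s [uS vS ruv Puv hon]]]] := hP2 x y exy.
have uv : u != v by apply/eqP => E; rewrite E ltnn in ruv.
have := sp_struct he uv (hP1 _ _ _ uS vS ruv Puv).
case => [E|[w [E _]]]; move: hon; rewrite E /edge_on_path /walk_edges /= !inE !xpair_eqE.
- by case/orP => /andP[/eqP ? /eqP ?]; subst; rewrite ?uS ?vS in xS.
- case/orP => [/orP[]|/orP[]] /andP[/eqP ? /eqP ?]; subst; rewrite ?uS ?vS in xS => //.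
  + by exists u, v; rewrite eqxx orbT.
  + by exists u, v; rewrite eqxx.
Qed.

Lemma key (T : finType) (e : rel T) (c : T -> bool)
  (he : forall x y, e x y = (c x != c y)) (S : {set T}) (P : T -> T -> option (seq T))
  (hP1 : forall u v s, u \in S -> v \in S -> enum_rank u < enum_rank v ->
        P u v = Some s -> shortest_path e u v s)
  (hP2 : forall x y, e x y -> exists u v s,
        [/\ u \in S, v \in S, enum_rank u < enum_rank v,
            P u v = Some s & edge_on_path x y u s]) (b : bool) :
  (forall x, c x == b -> x \in S) ->
  #|[set z | (c z != b) && (z \notin S)]| * (#|[set x | c x == b]| + odd #|[set x | c x == b]|)
    <= #|[set x | c x == b]| * (#|[set x | c x == b]| - 1).
Proof.
move=> XS.
set X := [set x | c x == b].
set Z := [set z | (c z != b) && (z \notin S)].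
set p := #|X|.
pose Q z := [set uv : T * T | [&& uv.1 \in S, uv.2 \in S, enum_rank uv.1 < enum_rank uv.2
   & P uv.1 uv.2 == Some [:: z; uv.2]]].
pose Pr := [set uv : T * T | [&& uv.1 \in X, uv.2 \in X & enum_rank uv.1 < enum_rank uv.2]].
have QPr : forall z, z \in Z -> Q z \subset Pr.
  move=> z; rewrite inE => /andP[cz _]; apply/subsetP => [[u v]].
  rewrite !inE /= => /and4P[uS vS ruv /eqP Puv].
  have [hp _ _] := hP1 _ _ _ uS vS ruv Puv.
  move: hp; rewrite /= !he andbT => /andP[h1 h2].
  rewrite ruv andbT.
  have hb : forall a1 a2 a3 a4 : bool, a3 != a4 -> a1 != a3 -> a3 != a2 -> (a1 == a4) && (a2 == a4) by do 4 case.
  exact: hb cz h1 h2.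
have Qbig : forall z, z \in Z -> p + odd p <= 2 * #|Q z|.
  move=> z; rewrite inE => /andP[cz zS].
  have sub : X \subset (fst @: Q z) :|: (snd @: Q z).
    apply/subsetP => x; rewrite inE => cx.
    have ezx : e z x by rewrite he (eqP cx).
    have [u [v [uS vS ruv Puv yuv]]] := mid he hP1 hP2 zS ezx.
    have inQ : (u, v) \in Q z by rewrite inE /= uS vS ruv Puv eqxx.
    case/orP: yuv => /eqP ->; rewrite inE.
    - by rewrite (imset_f fst inQ).
    - by rewrite (imset_f snd inQ) orbT.
  have h1 := subset_leq_card sub.
  have h2 := (leq_card_setU (fst @: Q z) (snd @: Q z)).1.
  have h3 := leq_imset_card fst (Q z).
  have h4 := leq_imset_card snd (Q z).
  have hp : p <= 2 * #|Q z| by rewrite /p; lia.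
  case: (boolP (odd p)) => op; last by rewrite addn0.
  rewrite addn1 ltn_neqAle hp andbT; apply/negP => /eqP E.
  by move: op; rewrite E mul2n odd_double.
have sumQ : \sum_(z in Z) #|Q z| <= #|Pr|.
  have H : forall uv, \sum_(z in Z) (uv \in Q z : nat) <= (uv \in Pr).
    move=> uv; case: (boolP [exists z in Z, uv \in Q z]) => [/exists_inP [z0 z0Z inQ]|/exists_inP none].
    - rewrite (bigD1 z0) //= inQ big1 ?addn0; first by rewrite (subsetP (QPr z0 z0Z) _ inQ).
      move=> z /andP[zZ nz]; apply/eqP; rewrite eqb0; apply/negP => inQz.
      move: inQ inQz; rewrite !inE => /and4P[_ _ _ /eqP ->] /and4P[_ _ _ /eqP [E]].
      by rewrite E eqxx in nz.
    - rewrite big1 // => z zZ; apply/eqP; rewrite eqb0; apply/negP => h; apply: none; by exists z.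
  have E : forall A : {set T * T}, #|A| = \sum_uv (uv \in A : nat).
    move=> A; rewrite -sum1_card big_mkcond /=; apply: eq_bigr => uv _; by case: (uv \in A).
  rewrite E; under eq_bigr => z _ do rewrite E.
  rewrite exchange_big /=; apply: leq_sum => uv _; exact: H.
have hPr : 2 * #|Pr| <= p * (p - 1).
  pose sw := fun uv : T * T => (uv.2, uv.1).
  have swK : cancel sw sw by case.
  pose D := [set (x, x) | x in X].
  have cD : #|D| = p by rewrite card_imset // => x y [].
  have DX : D \subset setX X X by apply/subsetP => _ /imsetP[x xX ->]; rewrite inE /= xX.
  have cXX : #|setX X X :\: D| = p * p - p by rewrite cardsD cardsX (setIidPr DX) cD.
  have inD : forall uv, uv \in D -> uv.1 = uv.2 by move=> _ /imsetP[x _ ->].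
  have Prn : forall uv, uv \in Pr -> [&& uv.1 != uv.2, uv.1 \in X, uv.2 \in X & enum_rank uv.1 < enum_rank uv.2].
    move=> [u v]; rewrite inE /= => /and3P[uX vX r]; rewrite uX vX r !andbT.
    by apply/eqP => E; rewrite E ltnn in r.
  have cU : #|Pr :|: sw @: Pr| = 2 * #|Pr|.
    rewrite cardsU (card_imset _ (can_inj swK)).
    have -> : Pr :&: sw @: Pr = set0.
      apply/setP => uv; rewrite in_setI in_set0; apply/negP => /andP[h1 /imsetP[w hw E]].
      move/Prn: h1 => /and4P[_ _ _ r1]; move/Prn: hw => /and4P[_ _ _ r2].
      by move: r1; rewrite E /= ltnNge (ltnW r2).
    rewrite cards0 subn0; lia.
  have sub : Pr :|: sw @: Pr \subset setX X X :\: D.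
    apply/subsetP => [[u v]]; rewrite in_setU in_setD in_setX => /orP[/Prn|/imsetP[w /Prn hw [-> ->]]].
    - case/and4P=> /= n12 -> -> _; rewrite !andbT; apply/negP => /(inD (u, v)) /= E; by rewrite E eqxx in n12.
    - case/and4P: hw => n12 h1 h2 _; rewrite /= h1 h2 !andbT; apply/negP => /(inD _) /= E.
      by rewrite E eqxx in n12.
  have := subset_leq_card sub; rewrite cU cXX; nia.
apply: (@leq_trans (\sum_(z in Z) 2 * #|Q z|)).
  rewrite -sum1_card big_distrl /=; apply: leq_sum => z zZ; rewrite mul1n; exact: Qbig.
rewrite -big_distrr /=; apply: leq_trans hPr; by rewrite leq_mul2l sumQ orbT.
Qed.

Definition cK n m (x : 'I_n + 'I_m) : bool := if x is inl _ then true else false.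

Lemma gen n m (S : {set 'I_n + 'I_m}) : strong_edge_geodetic (Knm n m) S ->
  exists zl zr, #|S| + zl + zr = n + m /\
   ((zr = 0 /\ zl * (m + odd m) <= m * (m - 1)) \/
    (zl = 0 /\ zr * (n + odd n) <= n * (n - 1))).
Proof.
case=> P [hP1 hP2].
have he : forall x y, Knm n m x y = (cK x != cK y) by case=> ? [] ?.
have cL : #|[set x : 'I_n + 'I_m | cK x == true]| = n.
  have -> : [set x : 'I_n + 'I_m | cK x == true] = inl @: [set: 'I_n].
    apply/setP => [[i|j]]; rewrite !inE /=.
    - by rewrite mem_imset ?inE // => a b [].
    - by apply/esym/imsetP => [[i _]].
  by rewrite card_imset ?cardsT ?card_ord // => a b [].
have cR : #|[set x : 'I_n + 'I_m | cK x == false]| = m.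
  have -> : [set x : 'I_n + 'I_m | cK x == false] = inr @: [set: 'I_m].
    apply/setP => [[i|j]]; rewrite !inE /=.
    - by apply/esym/imsetP => [[j _]].
    - by rewrite mem_imset ?inE // => a b [].
  by rewrite card_imset ?cardsT ?card_ord // => a b [].
set ZL := [set z : 'I_n + 'I_m | (cK z != false) && (z \notin S)].
set ZR := [set z : 'I_n + 'I_m | (cK z != true) && (z \notin S)].
exists #|ZL|, #|ZR|; split.
  have := cardsID [set x : 'I_n + 'I_m | cK x == true] (~: S).
  have eL : ~: S :&: [set x : 'I_n + 'I_m | cK x == true] = ZL.
    by apply/setP => x; rewrite !inE; case: (cK x); rewrite ?andbT ?andbF.
  have eR : ~: S :\: [set x : 'I_n + 'I_m | cK x == true] = ZR.
    by apply/setP => x; rewrite !inE; case: (cK x); rewrite ?andbT ?andbF.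
  rewrite eL eR => h; have := cardsC S; rewrite card_sum !card_ord;
  by move=> <-; rewrite -addnA h.
have side : forall x y, x \notin S -> Knm n m x y -> y \in S.
  move=> x y xS exy.
  have [u [v [uS vS _ _ /orP[] /eqP ->]]] := mid he hP1 hP2 xS exy => //.
case: (boolP (ZL == set0)) => [/eqP ZL0 | /set0Pn [x xZL]].
- right; split; first by rewrite ZL0 cards0.
  have XS : forall x, cK x == true -> x \in S.
    move=> x cx; apply/negPn/negP => xS.
    have : x \in ZL by rewrite inE xS (eqP cx).
    by rewrite ZL0 inE.
  by have := key he hP1 hP2 XS; rewrite cL.
- left.
  have ZR0 : ZR = set0.
    apply/setP => y; rewrite in_set0; apply/negP => yZR.
    move: xZL yZR; rewrite !inE => /andP[cx xS] /andP[cy yS].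
    have : y \in S by apply: (side x) => //; rewrite he; move: cx cy; case: (cK x); case: (cK y).
    by rewrite (negbTE yS).
  split; first by rewrite ZR0 cards0.
  have XS : forall y, cK y == false -> y \in S.
    move=> y cy; apply/negPn/negP => yS.
    have : y \in ZR by rewrite inE yS (eqP cy).
    by rewrite ZR0 inE.
  by have := key he hP1 hP2 XS; rewrite cR.
Qed.

Lemma bnd a p q : a * p <= q -> forall t, t <= a -> t * p <= q.
Proof. move=> h t ta; apply: leq_trans h; exact: leq_mul. Qed.

Lemma c1 n : 2 <= n -> (n - 1) * (n + 1) <= n * (n - 1) -> False.
Proof.
move=> n2; rewrite [n * _]mulnC leq_mul2l leqNgt; case/orP; first lia.
lia.
Qed.

Theorem mainTheorem6 (n : nat) :
  3 <= n -> odd n ->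
  sge_ge (Knm n n) (n + 2) /\ sge_ge (Knm n n.-1) (n + 1).
Proof.
move=> n3 on; split => S /gen [zl [zr [E H]]].
- rewrite on /= in H; case: H => [[Hz h]|[Hz h]]; rewrite Hz in E.
  + case: (leqP (n + 2) #|S|) => // lt; set s := #|S| in E lt *; clearbody s; exfalso; apply: (c1 (n := n)); first lia.
    apply: (bnd (t := n - 1) h); clear h; lia.
  + case: (leqP (n + 2) #|S|) => // lt; set s := #|S| in E lt *; clearbody s; exfalso; apply: (c1 (n := n)); first lia.
    apply: (bnd (t := n - 1) h); clear h; lia.
- have [k Ek] : exists k, n = k.+1 by case: n n3 {on S E H} => // k _; exists k.
  subst n; have ok : odd k = false by move: on => /= /negbTE.
  rewrite on /= ok in H.
  case: H => [[Hz h]|[Hz h]]; rewrite Hz in E.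
  + case: (leqP (k.+1 + 1) #|S|) => // lt; set s := #|S| in E lt *; clearbody s; exfalso.
    have h2 : k * (k + 0) <= k * (k - 1) by apply: (bnd (t := k) h); clear h; lia.
    move: h2; rewrite addn0 leq_mul2l; case/orP; lia.
  + case: (leqP (k.+1 + 1) #|S|) => // lt; set s := #|S| in E lt *; clearbody s; exfalso; apply: (c1 (n := k.+1)); first lia.
    apply: (bnd (t := k.+1 - 1) h); clear h; lia.
Qed.
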